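(* Let $\langle-,-\rangle$ be a cyclic form on $C$. Then: (1) $\langle e,\mu(v_1,\dots,v_n)\rangle=0$ for $n\le m-1$; (2) $\langle\mu(v_1,\dots,v_n),\mu(w_1,\dots,w_l)\rangle=0$ for $l\le m-1$ whenever each $v_i\in\mathrm{Span}\{w_1,\dots,w_l\}$.
   Context: $k$ is a field of characteristic zero, $V$ a $k$-vector space of dimension $m\ge1$ in degree $0$, $A=\mathrm{Sym}(V)$, and $C=A^{\textup{!`}}$ its Koszul dual coalgebra, the exterior coalgebra on $sV$ with elements $\mu(v_1,\dots,v_n)=sv_1\wedge\cdots\wedge sv_n$ (in all statements the $v_i$, resp. $w_j$, are taken linearly independent), counit/coaugmentation element $e$ (the empty wedge), and coproduct $\triangle\mu(v_1,\dots,v_n)=\sum_{p=0}^n\sum_{\sigma\in Sh_{p,n-p}}\mathrm{sgn}(\sigma)\,\mu(v_{\sigma(1)},\dots,v_{\sigma(p)})\otimes\mu(v_{\sigma(p+1)},\dots,v_{\sigma(n)})$ over $(p,n-p)$-shuffles. A symmetric bilinear form of degree $-d$ on $C$ is $\langle-,-\rangle:C\otimes C\to k[d]$ with $\langle a,b\rangle=(-1)^{|a||b|}\langle b,a\rangle$; it is cyclic if $\sum\langle a,b^2\rangle b^1=\sum\langle a^1,b\rangle a^2$ for all $a,b\in C$, where $\triangle(a)=\sum a^1\otimes a^2$, $\triangle(b)=\sum b^1\otimes b^2$. *)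

(* Defs.v *)
From HB Require Import structures.
From mathcomp Require Import all_boot all_order all_algebra.
Set Implicit Arguments. Unset Strict Implicit. Unset Printing Implicit Defensive.
Import Order.TTheory GRing.Theory Num.Theory.
Local Open Scope ring_scope.

(* Model: V = 'rV[k]_m (an m-dimensional k-vector space, fixed basis 'I_m).
   C = exterior coalgebra on sV, with basis e_S = s e_{s1} /\ ... /\ s e_{sn}
   for S = {s1 < ... < sn} a subset of 'I_m; e_S has degree #|S|. *)
Section Exterior.
Variables (k : fieldType) (m : nat).

Definition coalg := {ffun {set 'I_m} -> k}.
(* C (x) C, coefficients on e_S (x) e_T *)
Definition coalg2 := {ffun {set 'I_m} * {set 'I_m} -> k}.

Definition ebas (S : {set 'I_m}) : coalg := [ffun T : {set 'I_m} => (T == S)%:R].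

Definition eunit : coalg := ebas set0.

Definition homog (n : nat) (a : coalg) := forall S : {set 'I_m}, #|S| != n -> a S = 0.

(* mu(v_1,...,v_n) = s v_1 /\ ... /\ s v_n, expanded in the basis:
   coefficient of e_S (#|S| = n, S listed increasingly) is the n x n minor
   of the matrix with rows v_i and columns S. *)
Definition mu (n : nat) (v : 'I_n -> 'rV[k]_m) : coalg :=
  [ffun S : {set 'I_m} => if #|S| == n then
       \det (\matrix_(i < n, j < n) nth 0 [seq v i 0 c | c <- enum S] j)
     else 0].

(* sign of the unshuffle putting T in front of U *)
Definition shsign (T U : {set 'I_m}) : k :=
  (-1) ^+ #|[set p : 'I_m * 'I_m | [&& p.1 \in T, p.2 \in U & (p.2 < p.1)%N]]|.

(* coproduct: Delta e_S = sum_{T disjoint U, T :|: U = S} shsign T U e_T (x) e_U,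
   extended linearly *)
Definition cop (a : coalg) : coalg2 :=
  [ffun TU : {set 'I_m} * {set 'I_m} => if [disjoint TU.1 & TU.2] then shsign TU.1 TU.2 * a (TU.1 :|: TU.2)
              else 0].

Definition gram := {ffun {set 'I_m} * {set 'I_m} -> k}.
Definition bform (B : gram) (a b : coalg) : k :=
  \sum_(S : {set 'I_m}) \sum_(T : {set 'I_m}) a S * b T * B (S, T).

(* symmetric bilinear form of degree -d (we grade C by |e_S| = #|S|;
   the opposite convention |e_S| = -#|S| just replaces d by -d) *)
Definition symmetric_form_deg (B : gram) (d : int) :=
  (forall (p q : nat) a b, homog p a -> homog q b ->
     bform B a b = (-1) ^+ (p * q) * bform B b a) /\
  (forall (p q : nat) a b, homog p a -> homog q b -> (p + q)%:Z != d ->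
     bform B a b = 0).

(* sum <a, b^2> b^1 *)
Definition cyc_lhs (B : gram) (a b : coalg) : coalg :=
  [ffun S : {set 'I_m} => \sum_(U : {set 'I_m}) cop b (S, U) * bform B a (ebas U)].
(* sum <a^1, b> a^2 *)
Definition cyc_rhs (B : gram) (a b : coalg) : coalg :=
  [ffun U : {set 'I_m} => \sum_(T : {set 'I_m}) cop a (T, U) * bform B (ebas T) b].

Definition cyclic_form (B : gram) := forall a b, cyc_lhs B a b = cyc_rhs B a b.

End Exterior.

(* Main.v *)
Require Import Defs.
From HB Require Import structures.
From mathcomp Require Import all_boot all_order all_algebra.
From mathcomp Require Import zify.
Import Order.TTheory GRing.Theory Num.Theory.
Local Open Scope ring_scope.

Section Work.
Variables (k : fieldType) (m : nat).

Definition Dmat {N : nat} (x : 'I_N -> 'rV[k]_m) (i0 : 'I_m) (s : seq 'I_m) : 'M[k]_N :=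
  \matrix_(r, c) x r 0 (nth i0 s c).

Lemma D_swap N (x : 'I_N -> 'rV[k]_m) (i0 a b : 'I_m) (pre post : seq 'I_m) :
  ((size pre).+1 < N)%N ->
  \det (Dmat x i0 (pre ++ b :: a :: post)) = - \det (Dmat x i0 (pre ++ a :: b :: post)).
Proof.
move=> H.
have H1 : (size pre < N)%N by apply: ltnW.
pose j1 := Ordinal H1; pose j2 := Ordinal H.
have -> : Dmat x i0 (pre ++ b :: a :: post) =
   col_perm (perm.tperm j1 j2) (Dmat x i0 (pre ++ a :: b :: post)).
  apply/matrixP => r c; rewrite !mxE; congr (x r 0 _).
  case: perm.tpermP => [->|->|/eqP Hc1 /eqP Hc2].
  - by rewrite /= !nth_cat ltnn subnn /= ltnNge leqnSn /= subSnn.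
  - by rewrite /= !nth_cat ltnn ltnNge leqnSn /= subSnn subnn.
  - rewrite !nth_cat; case: ltnP => // Hc.
    have Hc1' : (c : nat) != size pre := Hc1.
    have Hc2' : (c : nat) != (size pre).+1 := Hc2.
    case E: (c - size pre)%N => [|[|t]] //=; exfalso; lia.
rewrite col_permE det_mulmx det_perm perm.tpermV perm.odd_tperm.
have -> : (j1 != j2) = true by rewrite -val_eqE /= neq_ltn ltnSn.
by rewrite expr1 mulrN1.
Qed.


Lemma D_ins N (x : 'I_N -> 'rV[k]_m) (i0 : 'I_m) (U : {set 'I_m}) (i : 'I_m) (L pre : seq 'I_m) :
  sorted (fun a b : 'I_m => (a < b)%N) L -> i \in L -> i \notin U ->
  (size pre + count (fun j => j \in i |: U) L = N)%N ->
  \det (Dmat x i0 (pre ++ [seq j <- L | j \in i |: U])) =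
  (-1) ^+ count (fun u : 'I_m => (u \in U) && (u < i)%N) L *
    \det (Dmat x i0 (pre ++ i :: [seq j <- L | j \in U])).
Proof.
elim: L pre => [//|a L IH] pre Hs HiL HiU HN.
have Hall : all (fun b : 'I_m => (a < b)%N) L.
  apply: (order_path_min _ Hs) => y y0 z; exact: ltn_trans.
have HsL : sorted (fun a b : 'I_m => (a < b)%N) L by apply: path_sorted Hs.
case: (eqVneq a i) => [Eai|Nai].
- subst a.
  have E1 : [seq j <- L | j \in i |: U] = [seq j <- L | j \in U].
    apply: eq_in_filter => j Hj; rewrite !inE.
    by move/allP: Hall => /(_ j Hj) Hij; rewrite (_ : (j == i) = false) //; apply/eqP => E; move: Hij; rewrite E ltnn.
  have E2 : count (fun u : 'I_m => (u \in U) && (u < i)%N) L = 0%N.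
    apply/eqP; rewrite -leqn0 leqNgt -has_count; apply/hasP => -[j Hj /andP[_ Hji]].
    by move/allP: Hall => /(_ j Hj) Hij; move: (ltn_trans Hij Hji); rewrite ltnn.
  by rewrite /= !inE eqxx /= (negbTE HiU) /= E1 E2 expr0 mul1r.
- have HiL' : i \in L by move: HiL; rewrite inE eq_sym (negbTE Nai).
  have Hai : (a < i)%N by move/allP: Hall => /(_ i HiL').
  have Hcnt : (0 < count (fun j => j \in i |: U) L)%N.
    by rewrite -has_count; apply/hasP; exists i => //; rewrite !inE eqxx.
  case: (boolP (a \in U)) => HaU.
  + rewrite /= !inE (negbTE Nai) HaU /= Hai.
    rewrite -cat_rcons IH //; last by rewrite size_rcons -HN /= !inE (negbTE Nai) HaU /= addSnnS.
    rewrite cat_rcons D_swap; last by rewrite -HN /= !inE (negbTE Nai) HaU /= addnS ltnS -addn1 leq_add2l.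
    by rewrite exprS mulN1r mulNr mulrN.
  + rewrite /= !inE (negbTE Nai) (negbTE HaU) /=.
    apply: IH => //; by rewrite -HN /= !inE (negbTE Nai) (negbTE HaU).
Qed.

Lemma enum_filt (S : {set 'I_m}) : enum S = [seq j <- enum 'I_m | j \in S].
Proof. by rewrite {1}/enum_mem -enumT. Qed.

Lemma count_card (P : pred 'I_m) : count P (enum 'I_m) = #|[set u | P u]|.
Proof.
rewrite cardE enum_filt size_filter; apply: eq_count => u; by rewrite inE.
Qed.

Lemma mu_D N (x : 'I_N -> 'rV[k]_m) i0 (S : {set 'I_m}) :
  #|S| = N -> mu x S = \det (Dmat x i0 (enum S)).
Proof.
move=> HS; rewrite ffunE HS eqxx; congr (\det _); apply/matrixP => r c.
by rewrite !mxE (nth_map i0) // -cardE HS.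
Qed.

Lemma shsign_l (U : {set 'I_m}) i :
  shsign k [set i] U = (-1) ^+ #|[set u in U | (u < i)%N]|.
Proof.
rewrite /shsign; congr (_ ^+ _).
have inj : injective (fun u : 'I_m => (i, u)) by move=> a b [].
rewrite -[in RHS](card_imset _ inj).
apply: eq_card => -[a b]; rewrite !inE /=.
apply/idP/imsetP => [/and3P[/eqP -> Hb Hba]|[u]]; first by exists b; rewrite // !inE Hb.
by rewrite !inE => /andP[Hu Hui] [-> ->]; rewrite eqxx Hu.
Qed.

Lemma shsign_r (U : {set 'I_m}) i :
  shsign k U [set i] = (-1) ^+ #|[set u in U | (i < u)%N]|.
Proof.
rewrite /shsign; congr (_ ^+ _).
have inj : injective (fun u : 'I_m => (u, i)) by move=> a b [].
rewrite -[in RHS](card_imset _ inj).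
apply: eq_card => -[a b]; rewrite !inE /=.
apply/idP/imsetP => [/and3P[Ha /eqP -> Hba]|[u]]; first by exists a; rewrite // !inE Ha.
by rewrite !inE => /andP[Hu Hui] [-> ->]; rewrite eqxx Hu.
Qed.

Lemma card_split (U : {set 'I_m}) i : i \notin U ->
  (#|[set u in U | (u < i)%N]| + #|[set u in U | (i < u)%N]| = #|U|)%N.
Proof.
move=> HiU; rewrite -(cardsID [set u : 'I_m | (u < i)%N] U); congr (_ + _)%N; apply: eq_card => u; rewrite !inE.
  by [].
case: (boolP (u \in U)) => Hu /=; last by rewrite andbF.
have Hne : u != i by apply: contraNneq HiU => <-.
have Hne' : (u : nat) != i := Hne.
apply/idP/idP; lia.
Qed.

Lemma mu_ins p (x : 'I_p.+1 -> 'rV[k]_m) i0 (U : {set 'I_m}) i :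
  i \notin U -> #|U| = p ->
  mu x (i |: U) = shsign k [set i] U * \det (Dmat x i0 (i :: enum U)).
Proof.
move=> HiU HU.
have Hc : #|i |: U| = p.+1 by rewrite cardsU1 HiU HU.
rewrite (mu_D _ x i0 _ Hc) enum_filt (D_ins _ x i0 U i (enum _) [::]) //.
- by rewrite shsign_l count_card -enum_filt.
- by have := iota_ltn_sorted 0 m; rewrite -val_enum_ord sorted_map.
- by rewrite mem_enum.
- by rewrite /= -size_filter -enum_filt -cardE.
Qed.

Lemma contr_det p (x : 'I_p.+1 -> 'rV[k]_m) (f : 'rV[k]_m) i0 (U : {set 'I_m}) : #|U| = p ->
  \sum_i cop (mu x) ([set i], U) * f 0 i =
  \det (\matrix_(r, c) if c == ord0 then \sum_i f 0 i * x r 0 i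
                       else x r 0 (nth i0 (enum U) c.-1)).
Proof.
move=> HU.
set A := \matrix_(r, c) _.
have Hcof : forall j r, cofactor A r ord0 = cofactor (Dmat x i0 (j :: enum U)) r ord0.
  move=> j r; rewrite /cofactor; congr (_ * \det _); apply/matrixP => a b; rewrite !mxE.
  by rewrite lift0.
transitivity (\sum_i f 0 i * \det (Dmat x i0 (i :: enum U))); last first.
  rewrite (expand_det_col A ord0).
  under [X in _ = X]eq_bigr => r _ do rewrite {1}/A mxE eqxx mulr_suml.
  rewrite exchange_big /=; apply: eq_bigr => i _.
  rewrite (expand_det_col _ ord0) mulr_sumr; apply: eq_bigr => r _.
  by rewrite (Hcof i) !mxE mulrA.
apply: eq_bigr => i _.
rewrite ffunE /= disjoints1.
case: (boolP (i \in U)) => HiU /=.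
- have Hidx : ((index i (enum U)).+1 < p.+1)%N by rewrite ltnS -HU cardE index_mem mem_enum.
  rewrite -det_tr (@determinant_alternate _ _ _ ord0 (Ordinal Hidx)) ?mulr0 ?mul0r //.
  move=> j; rewrite !mxE /= nth_index //; by rewrite mem_enum.
- by rewrite (mu_ins _ x i0 _ _ HiU HU) mulrA shsign_l -exprMn mulrNN mulr1 expr1n mul1r mulrC.
Qed.

Lemma mu_out n (v : 'I_n -> 'rV[k]_m) (S : {set 'I_m}) : #|S| != n -> mu v S = 0.
Proof. by move=> H; rewrite ffunE (negbTE H). Qed.

Lemma cop_small n (v : 'I_n -> 'rV[k]_m) (i : 'I_m) (T : {set 'I_m}) : #|T|.+1 != n -> cop (mu v) ([set i], T) = 0.
Proof.
move=> H; rewrite ffunE /=; case: ifP => // Hd.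
by rewrite mu_out ?mulr0 //; move: Hd; rewrite disjoints1 => Hd; rewrite cardsU1 Hd.
Qed.

Lemma contr_zero (i0 : 'I_m) n (v : 'I_n -> 'rV[k]_m) (f : 'rV[k]_m)
  (Hv : forall r, \sum_i f 0 i * v r 0 i = 0) (T : {set 'I_m}) :
  \sum_i cop (mu v) ([set i], T) * f 0 i = 0.
Proof.
case: n v Hv => [|p] v Hv.
  by apply: big1 => i _; rewrite cop_small ?mul0r.
case: (eqVneq #|T| p) => HT.
  rewrite (contr_det _ v f i0 _ HT) (expand_det_col _ ord0); apply: big1 => r _.
  by rewrite mxE eqxx Hv mul0r.
by apply: big1 => i _; rewrite cop_small ?mul0r.
Qed.

Definition ext {l : nat} (u : 'rV[k]_m) (w : 'I_l -> 'rV[k]_m) (r : 'I_l.+1) : 'rV[k]_m :=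
  if unlift ord0 r is Some j then w j else u.

Lemma contr_top (i0 : 'I_m) l (w : 'I_l -> 'rV[k]_m) (u : 'rV[k]_m) (f : 'rV[k]_m)
  (Hu : \sum_i f 0 i * u 0 i = 1) (Hw : forall j, \sum_i f 0 i * w j 0 i = 0) (U : {set 'I_m}) :
  \sum_i cop (mu (ext u w)) ([set i], U) * f 0 i = mu w U.
Proof.
case: (eqVneq #|U| l) => HU; last first.
  by rewrite mu_out // big1 // => i _; rewrite cop_small ?mul0r.
rewrite (contr_det _ _ f i0 _ HU) (expand_det_col _ ord0) (bigD1 ord0) //= big1 ?addr0.
  rewrite mxE eqxx /ext unlift_none Hu mul1r /cofactor addn0 expr0 mul1r (mu_D _ w i0 _ HU).
  congr (\det _); apply/matrixP => a b; rewrite !mxE liftK lift0 /=.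
  by [].
move=> r; case: (unliftP ord0 r) => [j ->|->]; last by rewrite eqxx.
by move=> _; rewrite mxE eqxx /ext liftK Hw mul0r.
Qed.

Lemma bform_e (B : gram k m) (a : coalg k m) (U : {set 'I_m}) :
  bform B a (ebas k U) = \sum_S a S * B (S, U).
Proof.
rewrite /bform; apply: eq_bigr => S _.
rewrite (bigD1 U) //= big1 => [|T /negbTE H]; last by rewrite ffunE H mulr0 mul0r.
by rewrite ffunE eqxx mulr1 addr0.
Qed.

Lemma bform_r (B : gram k m) (a b : coalg k m) :
  bform B a b = \sum_U b U * bform B a (ebas k U).
Proof.
under [RHS]eq_bigr => U _ do rewrite bform_e mulr_sumr.
rewrite exchange_big; apply: eq_bigr => S _; apply: eq_bigr => T _.
by rewrite mulrCA mulrA.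
Qed.

Lemma cop_swap (a : coalg k m) (T : {set 'I_m}) (i : 'I_m) :
  cop a (T, [set i]) = (-1) ^+ #|T| * cop a ([set i], T).
Proof.
rewrite !ffunE /= disjoint_sym disjoints1; case: ifP => H; last by rewrite mulr0.
rewrite shsign_r shsign_l setUC -(card_split T i H) exprD.
set s1 := (-1) ^+ #|[set u in T | (u < i)%N]|.
set s2 := (-1) ^+ #|[set u in T | (i < u)%N]|.
have sq : s1 * s1 = 1 by rewrite /s1 -exprMn mulrNN mulr1 expr1n.
by rewrite mulrA (mulrC s1) -(mulrA s2) sq mulr1.
Qed.

Lemma dotE (y f : 'rV[k]_m) : (y *m f^T) 0 0 = \sum_i f 0 i * y 0 i.
Proof. by rewrite mxE; apply: eq_bigr => i _; rewrite mxE mulrC. Qed.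

Lemma kern l (W : 'M[k]_(l, m)) : (l < m)%N ->
  exists f : 'rV[k]_m, exists i0, f 0 i0 = 1 /\ W *m f^T = 0.
Proof.
move=> Hl.
set K := kermx W^T.
have HK : K != 0.
  rewrite -mxrank_eq0 /K mxrank_ker -lt0n subn_gt0.
  by apply: leq_ltn_trans Hl; rewrite mxrank_tr rank_leq_row.
have : ~~ [forall i, forall j, K i j == 0].
  apply: contra HK => /forallP H; apply/eqP/matrixP => i j.
  by move: (H i) => /forallP /(_ j) /eqP ->; rewrite mxE.
have HKW : K *m W^T = 0 by apply: mulmx_ker.
clearbody K.
rewrite negb_forall => /existsP [i]; rewrite negb_forall => /existsP [j Hij].
exists ((K i j)^-1 *: row i K), j; split.
  by rewrite !mxE mulVf.
rewrite linearZ /= -scalemxAr.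
have -> : W *m (row i K)^T = 0.
  by rewrite -[W]trmxK -trmx_mul -row_mul HKW row0 trmx0.
by rewrite scaler0.
Qed.


Lemma part2 (B : gram k m) (Hcyc : cyclic_form B) n l
  (v : 'I_n -> 'rV[k]_m) (w : 'I_l -> 'rV[k]_m) :
  (l < m)%N -> (forall i, (v i <= \matrix_(j < l) w j)%MS) ->
  bform B (mu v) (mu w) = 0.
Proof.
move=> Hl Hvw.
set W := \matrix_(j < l) w j.
have [f [i0 [Hf0 HWf]]] := kern _ W Hl.
have Hw : forall j, \sum_i f 0 i * w j 0 i = 0.
  move=> j; rewrite -dotE.
  have -> : w j = row j W by apply/rowP => c; rewrite !mxE.
  by rewrite -row_mul HWf !mxE.
have Hv : forall r, \sum_i f 0 i * v r 0 i = 0.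
  move=> r; rewrite -dotE; have /submxP [D ->] := Hvw r.
  by rewrite -mulmxA HWf mulmx0 mxE.
pose u : 'rV[k]_m := delta_mx 0 i0.
have Hu : \sum_i f 0 i * u 0 i = 1.
  rewrite (bigD1 i0) //= big1 => [|i /negbTE Hi]; last by rewrite mxE Hi andbF mulr0.
  by rewrite mxE !eqxx mulr1 Hf0 addr0.
pose x := ext u w.
rewrite bform_r.
under eq_bigr => U _ do rewrite -(contr_top i0 _ _ _ _ Hu Hw U) mulr_suml.
rewrite exchange_big /=.
transitivity (\sum_i f 0 i * cyc_lhs B (mu v) (mu x) [set i]).
  apply: eq_bigr => i _; rewrite ffunE mulr_sumr; apply: eq_bigr => U _.
  by rewrite mulrCA mulrA mulrC.
under eq_bigr => i _ do rewrite Hcyc ffunE mulr_sumr.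
rewrite exchange_big /=; apply: big1 => T _.
transitivity ((\sum_i cop (mu v) (T, [set i]) * f 0 i) * bform B (ebas k T) (mu x)).
  rewrite mulr_suml; apply: eq_bigr => i _; by rewrite mulrCA mulrA mulrC.
under eq_bigr => i _ do rewrite cop_swap -mulrA.
by rewrite -mulr_sumr (contr_zero i0 _ _ f Hv T) mulr0 mul0r.
Qed.

End Work.

Theorem proposition9p1 (k : fieldType) (Hk : [pchar k] =i pred0)
    (m : nat) (Hm : (1 <= m)%N) (d : int) (B : gram k m)
    (Hsym : symmetric_form_deg B d) (Hcyc : cyclic_form B) :
  (forall (n : nat) (v : 'I_n -> 'rV[k]_m),
      (n <= m.-1)%N -> row_free (\matrix_(i < n) v i) ->
      bform B (eunit k m) (mu v) = 0) /\
  (forall (n l : nat) (v : 'I_n -> 'rV[k]_m) (w : 'I_l -> 'rV[k]_m),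
      (l <= m.-1)%N ->
      row_free (\matrix_(i < n) v i) -> row_free (\matrix_(j < l) w j) ->
      (forall i, (v i <= \matrix_(j < l) w j)%MS) ->
      bform B (mu v) (mu w) = 0).
Proof.
have Hlt : forall l, (l <= m.-1)%N -> (l < m)%N by move=> l Hl; rewrite -(prednK Hm) ltnS.
split.
  move=> n v Hn _.
  have -> : eunit k m = mu (fun _ : 'I_0 => (0 : 'rV[k]_m)).
    apply/ffunP => S; rewrite !ffunE cards_eq0.
    by case: (S == set0); rewrite ?det_mx00.
  by apply: part2 => //; [apply: Hlt | case].
move=> n l v w Hl _ _ Hvw; exact: part2 Hcyc _ _ _ _ (Hlt _ Hl) Hvw.
Qed.
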